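(* Let $a,b,c,p,\lambda,n$ be real constants with $3a=pb$, $c\lambda=0$ and $(1+p/3)\lambda=2-n$, and set $\tilde\lambda=1-\frac{n+\lambda}{2}$ and $$\tilde L=\tfrac12(ru_r-\lambda u)u_t^2-\tfrac16(ru_r-3\lambda u)(c+bu^p)u_r^2 .$$ Then, identically (for every smooth positive function $u(t,r)$, $r>0$), $$r^{n-1}(ru_r-\lambda u)\Big(u_{tt}-(c+bu^p)\big(u_{rr}+\tfrac{n-1}{r}u_r\big)-\tfrac{pb}{3}u^{p-1}u_r^2\Big)=-E_u\big(r^{n-1}\tilde L\big)-(rD_r+\tilde\lambda)\big(r^{n-1}u_t^2\big),$$ where $E_u=\partial_u-D_r\partial_{u_r}-D_t\partial_{u_t}$ is the Euler–Lagrange operator. Moreover, if in addition $c=0$, $p=6(1-3/n)$ and $\lambda=-n/3$, then multiplying this identity by $u_t$ yields a conservation law $D_tT+D_rX=0$ of equation (A) with $a=pb/3$, whose multiplier is $r^{n-1}u_t(ru_r+\tfrac n3u)$.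
   Context: Equation (A) with $a=pb/3$ is $u_{tt}=(c+bu^{p})\big(u_{rr}+\frac{n-1}{r}u_{r}\big)+\tfrac{pb}{3}u^{p-1}u_{r}^{2}$. $D_t,D_r$ denote total derivatives. *)

(* Defs.v *)
From Stdlib Require Import Reals ClassicalEpsilon.
Open Scope R_scope.

Definition differentiable_at (f : R -> R) (x : R) : Prop :=
  exists l, derivable_pt_lim f x l.

(* The derivative of f at x (the unique l with derivable_pt_lim f x l
   whenever f is differentiable at x; an unspecified real otherwise). *)
Definition deriv (f : R -> R) (x : R) : R :=
  epsilon (inhabits 0) (fun l => derivable_pt_lim f x l).

(* For a function of (t, r) obtained by substituting
   u(t,r) and its derivatives into a differential function, the partial
   derivative of the composite is exactly the total derivative D_t / D_r. *)
Definition Dt (f : R -> R -> R) (t r : R) : R := deriv (fun s => f s r) t.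
Definition Dr (f : R -> R -> R) (t r : R) : R := deriv (fun s => f t s) r.

(* Regularity class for u(t,r) on r > 0: positive, all first and second
   partial derivatives exist, and the mixed partials agree (all implied by
   smoothness + positivity). *)
Definition smooth_pos (u : R -> R -> R) : Prop :=
  forall t r, 0 < r ->
    0 < u t r /\
    differentiable_at (fun s => u s r) t /\ differentiable_at (fun s => u t s) r /\
    differentiable_at (fun s => Dt u s r) t /\ differentiable_at (fun s => Dt u t s) r /\
    differentiable_at (fun s => Dr u s r) t /\ differentiable_at (fun s => Dr u t s) r /\
    Dr (Dt u) t r = Dt (Dr u) t r.

Definition euler_lagrange (F : R -> R -> R -> R -> R) (u : R -> R -> R)
    (t r : R) : R :=
  deriv (fun v => F r v (Dr u t r) (Dt u t r)) (u t r)
  - Dr (fun t r => deriv (fun w => F r (u t r) w (Dt u t r)) (Dr u t r)) t r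
  - Dt (fun t r => deriv (fun w => F r (u t r) (Dr u t r) w) (Dt u t r)) t r.

Definition Ltilde (b c p lam : R) (r u ur ut : R) : R :=
  / 2 * (r * ur - lam * u) * ut ^ 2
  - / 6 * (r * ur - 3 * lam * u) * (c + b * Rpower u p) * ur ^ 2.

Definition weightedL (b c p lam n : R) (r u ur ut : R) : R :=
  Rpower r (n - 1) * Ltilde b c p lam r u ur ut.

(* Left-hand side of equation (A) minus right-hand side, with a = p b / 3:
   u_tt - (c + b u^p)(u_rr + (n-1)/r u_r) - (p b/3) u^{p-1} u_r^2 *)
Definition eqA (b c p n : R) (u : R -> R -> R) (t r : R) : R :=
  Dt (Dt u) t r
  - (c + b * Rpower (u t r) p) * (Dr (Dr u) t r + (n - 1) / r * Dr u t r)
  - p * b / 3 * Rpower (u t r) (p - 1) * (Dr u t r) ^ 2.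

(* Main.v *)
Require Import Defs.
From Stdlib Require Import Reals.
From Stdlib Require Import ClassicalEpsilon FunctionalExtensionality Lra.
From Coquelicot Require Import Coquelicot.
Open Scope R_scope.

Lemma deriv_is f x l : is_derive f x l -> deriv f x = l.
Proof.
  intro H. apply is_derive_Reals in H. unfold deriv.
  pose proof (epsilon_spec (inhabits 0) (fun l => derivable_pt_lim f x l) (ex_intro _ l H)) as H'.
  exact (uniqueness_limite f x _ _ H' H).
Qed.

Lemma diff_ex f x : differentiable_at f x -> ex_derive f x.
Proof. intros [l H]. exists l. apply is_derive_Reals; auto. Qed.

Lemma Derive_deriv f x : differentiable_at f x -> Derive f x = deriv f x.
Proof.
  intros [l H]. rewrite (deriv_is f x l); apply is_derive_Reals in H;
  [ apply is_derive_unique | ]; auto.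
Qed.

Lemma Rpow_is x y : 0 < x -> is_derive (fun x => Rpower x y) x (y * Rpower x y / x).
Proof.
  intro H. apply is_derive_Reals.
  replace (y * Rpower x y / x) with (y * Rpower x (y - 1)).
  apply derivable_pt_lim_power; auto.
  unfold Rminus. rewrite Rpower_plus, Rpower_Ropp, Rpower_1 by auto. unfold Rdiv; ring.
Qed.

Lemma Rpow_ex x y : 0 < x -> ex_derive (fun x => Rpower x y) x.
Proof. intro H. eexists. apply Rpow_is; auto. Qed.

Lemma Rpow_D x y : 0 < x -> Derive (fun x => Rpower x y) x = y * Rpower x y / x.
Proof. intro H. apply is_derive_unique, Rpow_is; auto. Qed.

Lemma Rpow_m1 x y : 0 < x -> Rpower x (y - 1) = Rpower x y / x.
Proof. intro H. unfold Rminus. rewrite Rpower_plus, Rpower_Ropp, Rpower_1 by auto. unfold Rdiv; ring. Qed.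

Lemma Dr_ext f g t r : (forall t r, f t r = g t r) -> Dr f t r = Dr g t r.
Proof. intro H. unfold Dr. f_equal. apply functional_extensionality; auto. Qed.
Lemma Dt_ext f g t r : (forall t r, f t r = g t r) -> Dt f t r = Dt g t r.
Proof. intro H. unfold Dt. f_equal. apply functional_extensionality; auto. Qed.
Lemma Dr_is f t r l : is_derive (fun s => f t s) r l -> Dr f t r = l.
Proof. apply deriv_is. Qed.
Lemma Dt_is f t r l : is_derive (fun s => f s r) t l -> Dt f t r = l.
Proof. apply deriv_is. Qed.

Section S.
Variables (b c p lam n : R).

Lemma dLw r v w z : deriv (fun w => weightedL b c p lam n r v w z) w =
  Rpower r (n-1) * (r/2*z^2 - r/6*(c+b*Rpower v p)*w^2 - /3*(r*w-3*lam*v)*(c+b*Rpower v p)*w).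
Proof. apply deriv_is. unfold weightedL, Ltilde. auto_derive; auto. field. Qed.

Lemma dLz r v w z : deriv (fun z => weightedL b c p lam n r v w z) z =
  Rpower r (n-1) * ((r*w - lam*v)*z).
Proof. apply deriv_is. unfold weightedL, Ltilde. auto_derive; auto. field. Qed.

Lemma dLv r v w z : 0 < v -> deriv (fun v => weightedL b c p lam n r v w z) v =
  Rpower r (n-1) * (-lam/2*z^2 + lam/2*(c+b*Rpower v p)*w^2
     - /6*(r*w-3*lam*v)*(b*(p*Rpower v p / v))*w^2).
Proof. intro H. apply deriv_is. unfold weightedL, Ltilde. auto_derive.
  repeat split; auto; apply Rpow_ex; auto.
  rewrite Rpow_D; auto. field. lra. Qed.
End S.

Definition G1 b c p lam n (u : R -> R -> R) t r := Rpower r (n-1) * (r/2*(Dt u t r)^2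
  - r/6*(c+b*Rpower (u t r) p)*(Dr u t r)^2
  - /3*(r*Dr u t r-3*lam*u t r)*(c+b*Rpower (u t r) p)*Dr u t r).
Definition G2 (lam n : R) (u : R -> R -> R) t r :=
  Rpower r (n-1) * ((r*Dr u t r - lam*u t r)*Dt u t r).

Lemma part1 (a b c p lam n : R)
  (Ha : 3 * a = p * b) (Hc : c * lam = 0) (Hl : (1 + p / 3) * lam = 2 - n) :
  (forall (u : R -> R -> R), smooth_pos u -> forall t r : R, 0 < r ->
     Rpower r (n - 1) * (r * Dr u t r - lam * u t r) * eqA b c p n u t r
     = - euler_lagrange (weightedL b c p lam n) u t r
       - (r * Dr (fun t r => Rpower r (n - 1) * (Dt u t r) ^ 2) t r
          + (1 - (n + lam) / 2) * (Rpower r (n - 1) * (Dt u t r) ^ 2))).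
Proof.
  intros u Hu t r Hr.
  destruct (Hu t r Hr) as (Hpos & d1 & d2 & d3 & d4 & d5 & d6 & Hmix).
  assert (e1 : Derive (fun s => u s r) t = Dt u t r) by (apply Derive_deriv; auto).
  assert (e2 : Derive (fun s => u t s) r = Dr u t r) by (apply Derive_deriv; auto).
  assert (e3 : Derive (fun s => Dt u s r) t = Dt (Dt u) t r) by (apply Derive_deriv; auto).
  assert (e4 : Derive (fun s => Dt u t s) r = Dr (Dt u) t r) by (apply Derive_deriv; auto).
  assert (e5 : Derive (fun s => Dr u s r) t = Dt (Dr u) t r) by (apply Derive_deriv; auto).
  assert (e6 : Derive (fun s => Dr u t s) r = Dr (Dr u) t r) by (apply Derive_deriv; auto).
  apply diff_ex in d1, d2, d3, d4, d5, d6.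
  unfold euler_lagrange.
  rewrite dLv by auto.
  rewrite (Dr_ext (fun t r => deriv (fun w => weightedL b c p lam n r (u t r) w (Dt u t r)) (Dr u t r)) (G1 b c p lam n u) t r) by (intros; apply dLw).
  rewrite (Dt_ext (fun t r => deriv (fun w => weightedL b c p lam n r (u t r) (Dr u t r) w) (Dt u t r)) (G2 lam n u) t r) by (intros; apply dLz).
  erewrite (Dr_is (G1 b c p lam n u) t r).
  2:{ unfold G1. auto_derive. repeat split; auto; apply Rpow_ex; auto. reflexivity. }
  erewrite (Dt_is (G2 lam n u) t r).
  2:{ unfold G2. auto_derive. repeat split; auto. reflexivity. }
  erewrite (Dr_is (fun t r : R => Rpower r (n - 1) * (Dt u t r) ^ 2) t r).
  2:{ auto_derive. repeat split; auto; apply Rpow_ex; auto. reflexivity. }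
  rewrite e1, e2, e3, e4, e5, e6, <- Hmix, !Rpow_D by auto.
  unfold eqA. rewrite !Rpow_m1 by auto.
  assert (Hr' : r <> 0) by lra.
  revert Hpos.
  generalize (Rpower r n) (Dt (Dt u) t r) (Dr (Dr u) t r)
    (Dr (Dt u) t r) (Dr u t r) (Dt u t r) (u t r).
  intros W utt urr utr ur ut U HU.
  set (P := Rpower U p) in *. clearbody P.
  assert (HU' : U <> 0) by lra.
  assert (Hn : n = 2 - (1 + p/3) * lam) by lra. subst n.
  destruct (Rmult_integral _ _ Hc) as [-> | ->].
  all: field; auto.
Qed.

Definition TT (b p n : R) (t r v vt vr : R) : R :=
  /2 * vt^2 * Rpower r (n-1) * (r*vr + n/3*v) + b/6 * Rpower r (n-1) * Rpower v p * vr^2 * (r*vr + n*v).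
Definition XX (b p n : R) (t r v vt vr : R) : R :=
  - Rpower r (n-1) * r * vt^3 / 6 - b*Rpower r (n-1)*Rpower v p*vt*vr*(r*vr/2 + n*v/3).

Lemma part2 (a b c p lam n : R)
  (Ha : 3 * a = p * b) (Hc : c * lam = 0) (Hl : (1 + p / 3) * lam = 2 - n) :
  (c = 0 -> p = 6 * (1 - 3 / n) -> lam = - n / 3 ->
   exists T X : R -> R -> R -> R -> R -> R,
     forall (u : R -> R -> R), smooth_pos u -> forall t r : R, 0 < r ->
       Rpower r (n - 1) * Dt u t r * (r * Dr u t r + n / 3 * u t r)
         * eqA b c p n u t r
       = Dt (fun t r => T t r (u t r) (Dt u t r) (Dr u t r)) t r
         + Dr (fun t r => X t r (u t r) (Dt u t r) (Dr u t r)) t r).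
Proof.
  intros Hc0 Hp Hlam.
  assert (Hn0 : n <> 0).
  { intro H0. rewrite Hlam, H0 in Hl. lra. }
  exists (TT b p n), (XX b p n).
  intros u Hu t r Hr.
  destruct (Hu t r Hr) as (Hpos & d1 & d2 & d3 & d4 & d5 & d6 & Hmix).
  assert (e1 : Derive (fun s => u s r) t = Dt u t r) by (apply Derive_deriv; auto).
  assert (e2 : Derive (fun s => u t s) r = Dr u t r) by (apply Derive_deriv; auto).
  assert (e3 : Derive (fun s => Dt u s r) t = Dt (Dt u) t r) by (apply Derive_deriv; auto).
  assert (e4 : Derive (fun s => Dt u t s) r = Dr (Dt u) t r) by (apply Derive_deriv; auto).
  assert (e5 : Derive (fun s => Dr u s r) t = Dt (Dr u) t r) by (apply Derive_deriv; auto).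
  assert (e6 : Derive (fun s => Dr u t s) r = Dr (Dr u) t r) by (apply Derive_deriv; auto).
  apply diff_ex in d1, d2, d3, d4, d5, d6.
  erewrite (Dt_is (fun t r : R => TT b p n t r (u t r) (Dt u t r) (Dr u t r)) t r).
  2:{ unfold TT. auto_derive. repeat split; auto; apply Rpow_ex; auto. reflexivity. }
  erewrite (Dr_is (fun t r : R => XX b p n t r (u t r) (Dt u t r) (Dr u t r)) t r).
  2:{ unfold XX. auto_derive. repeat split; auto; apply Rpow_ex; auto. reflexivity. }
  rewrite e1, e2, e3, e4, e5, e6, <- Hmix, !Rpow_D by auto.
  unfold eqA. rewrite !Rpow_m1 by auto.
  assert (Hr' : r <> 0) by lra.
  revert Hpos.
  generalize (Rpower r n) (Dt (Dt u) t r) (Dr (Dr u) t r)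
    (Dr (Dt u) t r) (Dr u t r) (Dt u t r) (u t r).
  intros W utt urr utr ur ut U HU.
  set (P := Rpower U p) in *. clearbody P.
  assert (HU' : U <> 0) by lra.
  subst c p. field; auto.
Qed.

Theorem mainTheorem9 (a b c p lam n : R)
  (Ha : 3 * a = p * b) (Hc : c * lam = 0) (Hl : (1 + p / 3) * lam = 2 - n) :
  (forall (u : R -> R -> R), smooth_pos u -> forall t r : R, 0 < r ->
     Rpower r (n - 1) * (r * Dr u t r - lam * u t r) * eqA b c p n u t r
     = - euler_lagrange (weightedL b c p lam n) u t r
       - (r * Dr (fun t r => Rpower r (n - 1) * (Dt u t r) ^ 2) t r
          + (1 - (n + lam) / 2) * (Rpower r (n - 1) * (Dt u t r) ^ 2)))
  /\
  (c = 0 -> p = 6 * (1 - 3 / n) -> lam = - n / 3 ->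
   exists T X : R -> R -> R -> R -> R -> R,
     forall (u : R -> R -> R), smooth_pos u -> forall t r : R, 0 < r ->
       Rpower r (n - 1) * Dt u t r * (r * Dr u t r + n / 3 * u t r)
         * eqA b c p n u t r
       = Dt (fun t r => T t r (u t r) (Dt u t r) (Dr u t r)) t r
         + Dr (fun t r => X t r (u t r) (Dt u t r) (Dr u t r)) t r).
Proof.
  split; [ eapply part1 | eapply part2 ]; eauto.
Qed.
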